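(* Let $q=p^m$ be a prime power with $p$ prime, let $3\le h\le k$ be integers, and $$D_2=\Bigl\{(x_1,\ldots,x_k)\in\mathbb{F}_q^k\setminus\{0\}:\prod_{1\le i<j\le h}(x_i+x_j)=0\Bigr\}.$$ Let $$\Gamma(h,q)=\sum_{s=1}^{\min(h,(q-1)/2)}\frac{(q-1)(q-3)\cdots(q-2s+1)}{s!}\,\mathcal{S}(h,s),$$ where $\mathcal{S}(x,y)$ is the number of surjective functions from a set of size $x$ onto a set of size $y\le x$. Then the length $\#D_2$ of the code $\mathrm{C}_{D_2}$ equals $q^{k-h}\bigl(q^h-q(q-1)\cdots(q-h+1)\bigr)-1$ if $p=2$ and $h\le q$; $q^k-1$ if $p=2$ and $h>q$; and $q^{k-h}\bigl(q^h-\Gamma(h,q)-h\Gamma(h-1,q)\bigr)-1$ if $p>2$.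
   Context: For a finite set $D=\{P_1,\ldots,P_n\}\subseteq\mathbb{F}_q^k$, $\mathrm{C}_D=\{(f(P_1),\ldots,f(P_n)):f:\mathbb{F}_q^k\to\mathbb{F}_q\text{ linear}\}$, a code of length $n=\#D$. *)

(* Defs.v *)
From HB Require Import structures.
From mathcomp Require Import all_boot all_order all_algebra all_field.
Set Implicit Arguments. Unset Strict Implicit. Unset Printing Implicit Defensive.
Import GRing.Theory.
Local Open Scope ring_scope.

(* The defining set D2 of the code C_{D2}: nonzero vectors x in F^k with
   prod_{1<=i<j<=h} (x_i + x_j) = 0 (coordinates indexed from 0 here). *)
Definition D2 (F : finFieldType) (k h : nat) : {set 'rV[F]_k} :=
  [set x : 'rV[F]_k | (x != 0) &&
     (\prod_(i : 'I_k) \prod_(j : 'I_k | (i < j)%N && (j < h)%N) (x 0 i + x 0 j) == 0)].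

(* The code C_D = { (f(P_1),...,f(P_n)) : f linear } ; its length is #D. *)
Definition code_length (F : finFieldType) (k : nat) (D : {set 'rV[F]_k}) : nat := #|D|.

Definition nsurj (x y : nat) : nat :=
  #|[set f : {ffun 'I_x -> 'I_y} | [forall j : 'I_y, exists i : 'I_x, f i == j]]|.

Definition Gamma (h q : nat) : rat :=
  \sum_(1 <= s < (minn h ((q - 1) %/ 2)).+1)
     ((\prod_(i < s) ((q%:R : rat) - (2 * i + 1)%:R)) / (s`!)%:R * (nsurj h s)%:R).

(* Main.v *)
Require Import Defs.
From HB Require Import structures.
From mathcomp Require Import all_boot all_order all_algebra all_field.
From mathcomp Require Import zify ring.
Set Implicit Arguments. Unset Strict Implicit. Unset Printing Implicit Defensive.
Import GRing.Theory Num.Theory.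
Local Open Scope ring_scope.

Definition goodk (F : finFieldType) k h (x : 'rV[F]_k) : bool :=
  [forall i : 'I_k, forall j : 'I_k, ((i < j)%N && (j < h)%N) ==> (x 0 i + x 0 j != 0)].

Definition goodf (F : finFieldType) h (a : {ffun 'I_h -> F}) : bool :=
  [forall i : 'I_h, forall j : 'I_h, (i < j)%N ==> (a i + a j != 0)].

Lemma prod_good (F : finFieldType) k h (x : 'rV[F]_k) :
  (\prod_(i : 'I_k) \prod_(j : 'I_k | (i < j)%N && (j < h)%N) (x 0 i + x 0 j) == 0)
  = ~~ goodk h x.
Proof.
apply/prodf_eq0/idP => [[i _ /prodf_eq0 [j hij e]] | ].
- apply/negP => /forallP /(_ i) /forallP /(_ j); by rewrite hij e.
- move/forallPn => [i /forallPn [j]]; rewrite negb_imply => /andP [hij e].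
  exists i => //; apply/prodf_eq0; exists j => //. by rewrite negbK in e.
Qed.

Lemma card_D2 (F : finFieldType) k h (h2 : (2 <= h)%N) (hk : (h <= k)%N) :
  (code_length (D2 F k h) + #|[set x : 'rV[F]_k | goodk h x]| + 1)%N = (#|F| ^ k)%N.
Proof.
have e : D2 F k h = (~: [set x | goodk h x]) :\ 0.
  apply/setP => x; rewrite !inE prod_good; by rewrite andbC.
have g0 : (0 : 'rV[F]_k) \in ~: [set x | goodk h x].
  rewrite !inE; apply/negP => /forallP /(_ (Ordinal (leq_trans (isT : (0 < 2)%N) (leq_trans h2 hk)))).
  move=> /forallP /(_ (Ordinal (leq_trans h2 hk))) /=.
  by rewrite h2 !mxE addr0 eqxx.
rewrite /code_length e.
have := cardsD1 (0 : 'rV[F]_k) (~: [set x | goodk h x]).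
rewrite g0 cardsCs setCK card_mx mul1n => H.
have : (#|[set x : 'rV[F]_k | goodk h x]| <= #|F| ^ k)%N.
  apply: leq_trans (max_card _) _; by rewrite card_mx mul1n.
move=> Hl; rewrite -(subnK Hl) H. by rewrite addn1 add1n addSn.
Qed.

Lemma goodk_goodf (F : finFieldType) h (u : 'rV[F]_h) :
  goodk h u = goodf [ffun i => u 0 i].
Proof.
apply/forallP/forallP => H i; apply/forallP => j; have /forallP/(_ j) := H i;
  by rewrite (ltn_ord j) andbT !ffunE.
Qed.

Lemma card_good_split (F : finFieldType) h k' :
  #|[set x : 'rV[F]_(h + k') | goodk h x]| =
  (#|F| ^ k' * #|[set a : {ffun 'I_h -> F} | goodf a]|)%N.
Proof.
have E1 : [set x : 'rV[F]_(h + k') | goodk h x] =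
   [set row_mx uv.1 uv.2 | uv in setX [set u : 'rV[F]_h | goodk h u] [set: 'rV[F]_k']].
  apply/setP => x; rewrite inE; apply/idP/imsetP.
  - move=> gx; exists (lsubmx x, rsubmx x); last by rewrite hsubmxK.
    rewrite !inE /=; apply/andP; split => //.
    apply/forallP => i; apply/forallP => j; apply/implyP => /andP [ij _].
    have /forallP/(_ (lshift k' i)) /forallP /(_ (lshift k' j)) := gx.
    by rewrite /= ij ltn_ord /= !mxE.
  - move=> [[u v]]; rewrite !inE /= => /andP [gu _] ->.
    apply/forallP => i; apply/forallP => j; apply/implyP => /andP [ij jh].
    have ih : (i < h)%N by apply: ltn_trans ij jh.
    have -> : i = lshift k' (Ordinal ih) by apply/val_inj.
    have -> : j = lshift k' (Ordinal jh) by apply/val_inj.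
    rewrite !row_mxEl.
    have /forallP/(_ (Ordinal ih)) /forallP /(_ (Ordinal jh)) := gu.
    by rewrite /= ij jh.
have E2 : [set a : {ffun 'I_h -> F} | goodf a] =
    [set [ffun i => u 0 i] | u : 'rV[F]_h in [set u : 'rV[F]_h | goodk h u]].
  apply/setP => a; rewrite inE; apply/idP/imsetP.
  - move=> ga; exists (\row_i a i).
      by rewrite inE goodk_goodf; suff -> : [ffun i => (\row_i a i) 0 i] = a by []; apply/ffunP => i; rewrite !ffunE mxE.
    by apply/ffunP => i; rewrite !ffunE mxE.
  - by move=> [u]; rewrite inE goodk_goodf => gu ->.
rewrite E1 E2 !card_imset ?cardsX ?cardsT ?card_mx ?mul1n 1?mulnC //.
- by move=> [u v] [u' v'] /= /eq_row_mx [-> ->].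
- move=> u u' /ffunP e; apply/rowP => i; have := e i; by rewrite !ffunE.
Qed.

Lemma goodf_inj (F : finFieldType) h (a : {ffun 'I_h -> F}) :
  (2%:R : F) = 0 -> goodf a = injectiveb a.
Proof.
move=> h2.
have xx : forall x : F, x + x = 0 by move=> x; rewrite -mulr2n -mulr_natl h2 mul0r.
have nx : forall x : F, - x = x by move=> x; apply/eqP; rewrite eq_sym -subr_eq0 opprK xx.
apply/idP/injectiveP.
- move=> /forallP ga i j e; apply/eqP; case: (ltngtP i j) => [ij|ji|/val_inj -> //].
  + by have /forallP/(_ j)/implyP/(_ ij) := ga i; rewrite e xx eqxx.
  + by have /forallP/(_ i)/implyP/(_ ji) := ga j; rewrite e xx eqxx.
- move=> ia; apply/forallP => i; apply/forallP => j; apply/implyP => ij.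
  apply/negP; rewrite addr_eq0 nx => /eqP /ia e.
  by rewrite e ltnn in ij.
Qed.

Lemma ffact_rat (q h : nat) : ((q ^_ h)%:R : rat) = \prod_(i < h) ((q%:R : rat) - i%:R).
Proof.
elim: h => [|h IH]; first by rewrite ffactn0 big_ord0.
rewrite ffactnSr big_ord_recr /= -IH natrM.
case: (leqP h q) => hq; first by rewrite natrB.
by rewrite ffact_small // mul0r mul0r.
Qed.

Definition P0 (F : finFieldType) h (a : {ffun 'I_h -> F}) : bool :=
  [forall i, a i != 0] && [forall i, forall j, a i + a j != 0].
Definition Qs (F : finFieldType) (S : {set F}) : bool :=
  (0 \notin S) && [forall x in S, - x \notin S].
Definition img (F : finFieldType) h (a : {ffun 'I_h -> F}) : {set F} := [set a i | i in [set: 'I_h]].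
Definition Acnt (F : finFieldType) s := #|[set S : {set F} | Qs S && (#|S| == s)]|.

Lemma P0_img (F : finFieldType) h (a : {ffun 'I_h -> F}) : P0 a = Qs (img a).
Proof.
rewrite /P0 /Qs; congr andb.
- apply/forallP/idP => [H | H i].
  + apply/imsetP => [[i _ e]]. by have := H i; rewrite -e eqxx.
  + apply/negP => /eqP e; move/negP: H; apply; apply/imsetP; by exists i.
- apply/forallP/forall_inP => [H x /imsetP [i _ ->] | H i].
  + apply/imsetP => [[j _ e]]. have /forallP/(_ j) := H i. by rewrite -e addrN eqxx.
  + apply/forallP => j; apply/negP; rewrite addr_eq0 => /eqP e.
    have := H (a i) (imset_f _ (in_setT i)). by rewrite e opprK (imset_f _ (in_setT j)).
Qed.

Lemma count0_sum (F : finFieldType) h :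
  #|[set a : {ffun 'I_h -> F} | P0 a]| =
  (\sum_(S : {set F} | Qs S) #|[set a : {ffun 'I_h -> F} | img a == S]|)%N.
Proof.
rewrite -sum1_card (partition_big (@img F h) (@Qs F)).
- apply: eq_bigr => S QS. rewrite -sum1_card; apply: eq_bigl => a. rewrite !inE.
  apply/andP/idP => [[_ //]|e]; split=>//. by rewrite P0_img (eqP e).
- by move=> a; rewrite inE P0_img.
Qed.

Lemma card_img (F : finFieldType) h (S : {set F}) :
  #|[set a : {ffun 'I_h -> F} | img a == S]| = nsurj h #|S|.
Proof.
rewrite /nsurj.
have -> : [set a : {ffun 'I_h -> F} | img a == S] =
   [set [ffun i => (enum_val : 'I_#|S| -> F) (g i)] | g : {ffun 'I_h -> 'I_#|S|} in
      [set g : {ffun 'I_h -> 'I_#|S|} | [forall j, exists i, g i == j]]].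
  apply/setP => a; rewrite inE; apply/eqP/imsetP.
  - move=> e. have aS : forall i, a i \in S by move=> i; rewrite -e imset_f ?in_setT.
    exists [ffun i => enum_rank_in (aS i) (a i)].
    + rewrite inE; apply/forallP => j.
      have : enum_val j \in img a by rewrite e enum_valP.
      case/imsetP => i _ ei. apply/existsP; exists i.
      have := enum_valK_in (aS i) j. by rewrite ffunE ei => ->.
    + by apply/ffunP => i; rewrite !ffunE (enum_rankK_in (aS i) (aS i)).
  - move=> [g]; rewrite inE => /forallP sg ->.
    apply/setP => x; apply/imsetP/idP => [[i _ ->]|xS]; first by rewrite ffunE enum_valP.
    have/existsP [i /eqP gi] := sg (enum_rank_in xS x).
    exists i => //. by rewrite ffunE gi (enum_rankK_in xS xS).
rewrite card_imset // => g g' e; apply/ffunP => i.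
move/ffunP/(_ i): e; rewrite !ffunE; by move/enum_val_inj.
Qed.

Lemma sum_by_size (F : finFieldType) h :
  (\sum_(S : {set F} | Qs S) nsurj h #|S| =
   \sum_(s < #|F|.+1) Acnt F s * nsurj h s)%N.
Proof.
rewrite (partition_big (fun S : {set F} => (inord #|S| : 'I_#|F|.+1)) xpredT) //.
apply: eq_bigr => s _; rewrite /Acnt -sum_nat_const.
apply: eq_big => [S|S /andP [_ /eqP <-]].
- rewrite inE -val_eqE /= inordK // ltnS; exact: max_card.
- by rewrite inordK // ltnS; exact: max_card.
Qed.

Lemma card_pairs (T U : finType) (P : pred T) (R : T -> pred U) :
  #|[set p : T * U | P p.1 && R p.1 p.2]| = (\sum_(t | P t) #|[set u | R t u]|)%N.
Proof.
rewrite -sum1_card; symmetry. under eq_bigr do rewrite -sum1_card.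
rewrite pair_big_dep. apply: eq_bigl => p. by rewrite !inE.
Qed.

Lemma Qs_sub (F : finFieldType) (S T : {set F}) : T \subset S -> Qs S -> Qs T.
Proof.
move=> /subsetP sub /andP [n0 /forall_inP H]; apply/andP; split.
- exact: (contra (sub 0%R)) n0.
- apply/forall_inP => x xT; exact: (contra (sub (-x))) (H x (sub x xT)).
Qed.

Lemma card_free (F : finFieldType) (T : {set F}) : Qs T ->
  (#|[set x : F | (x != 0%R) && (x \notin T) && (- x \notin T)]| + (2 * #|T|).+1)%N = #|F|.
Proof.
move=> /andP [n0 /forall_inP H].
set N := [set x : F | - x \in T].
have cN : #|N| = #|T|.
  rewrite -(card_preimset T (@oppr_inj F)); apply: eq_card => x; by rewrite !inE.
have dis : T :&: N = set0.
  apply/setP => x; rewrite !inE; apply/andP => [[xT nxT]]; by move/negP: (H x xT).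
have z : 0 \notin T :|: N by rewrite !inE oppr0 orbb.
have -> : [set x : F | (x != 0) && (x \notin T) && (- x \notin T)] = ~: (0 |: (T :|: N)).
  apply/setP => x; rewrite !inE.
  by case: (x == 0); case: (x \in T); case: (-x \in T).
rewrite addnC -[X in _ = X](cardsC (0 |: (T :|: N))) cardsU1 z cardsU dis cards0 cN.
by rewrite subn0 add1n mul2n -addnn.
Qed.

Lemma Acnt_le (F : finFieldType) s : (0 < Acnt F s)%N -> ((2 * s).+1 <= #|F|)%N.
Proof.
case/card_gt0P => T; rewrite inE => /andP [QT /eqP <-].
have := card_free QT; lia.
Qed.

Lemma Arec (F : finFieldType) s : (2%:R : F) != 0 ->
  (Acnt F s.+1 * s.+1 = Acnt F s * (#|F| - (2 * s).+1))%N.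
Proof.
move=> h2.
set X := [set p : {set F} * F | (Qs p.1 && (#|p.1| == s.+1)) && (p.2 \in p.1)].
set Y := [set p : {set F} * F | (Qs p.1 && (#|p.1| == s)) &&
            ((p.2 != 0) && (p.2 \notin p.1) && (- p.2 \notin p.1))].
have cX : #|X| = (Acnt F s.+1 * s.+1)%N.
  rewrite /X (card_pairs (fun S => Qs S && (#|S| == s.+1)) (fun S x => x \in S)).
  rewrite /Acnt -sum_nat_const.
  apply: eq_big => [S|S /andP [_ /eqP <-]]; first by rewrite inE.
  by apply: eq_card => x; rewrite inE.
have cY : #|Y| = (Acnt F s * (#|F| - (2 * s).+1))%N.
  rewrite /Y (card_pairs (fun S => Qs S && (#|S| == s))
      (fun S x => (x != 0) && (x \notin S) && (- x \notin S))).
  rewrite /Acnt -sum_nat_const.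
  apply: eq_big => [S|S /andP [QS /eqP <-]]; first by rewrite inE.
  rewrite -(card_free QS) addnK; apply: eq_card => x; by rewrite !inE.
have nxx : forall x : F, x != 0 -> - x != x.
  move=> x x0; apply/negP => /eqP e.
  have : x + x == 0 by rewrite -{1}e addNr.
  by rewrite -mulr2n -mulr_natl mulf_eq0 (negbTE h2) (negbTE x0).
have EY : Y = [set (p.1 :\ p.2, p.2) | p in X].
  apply/setP => [[T x]]; rewrite !inE /=; apply/idP/imsetP.
  - move=> /andP [/andP [QT /eqP cT] /andP [/andP [x0 xT] nxT]].
    exists (x |: T, x); last by rewrite /= setU1K.
    rewrite !inE /= eqxx orTb andbT cardsU1 xT cT add1n eqxx andbT.
    move: QT => /andP [n0 /forall_inP H].
    apply/andP; split; first by rewrite !inE negb_or eq_sym x0.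
    apply/forall_inP => y; rewrite !inE => /orP [/eqP ->|yT].
    + by rewrite negb_or nxT andbT nxx.
    + rewrite negb_or H // andbT; apply/negP => /eqP e.
      by move/negP: nxT; apply; rewrite -e opprK.
  - move=> [[S y]]; rewrite !inE /= => /andP [/andP [QS /eqP cS] yS] [-> ->].
    rewrite (Qs_sub (subsetDl S [set y]) QS) /=.
    have := cardsD1 y S; rewrite yS cS add1n => [[<-]]; rewrite eqxx /=.
    move: QS => /andP [n0 /forall_inP H].
    rewrite !inE eqxx /= negb_and H // orbT andbT.
    rewrite andbT; by apply/negP => /eqP e; move/negP: n0; apply; rewrite -e.
rewrite EY card_in_imset in cY; first by rewrite -cX -cY.
move=> [S x] [S' x']; rewrite !inE /= => /andP [_ xS] /andP [_ xS'] [e1 e2].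
subst x'. by rewrite -(setD1K xS) -(setD1K xS') e1.
Qed.

Lemma Acnt0 (F : finFieldType) : Acnt F 0 = 1%N.
Proof.
rewrite /Acnt.
have -> : [set S : {set F} | Qs S && (#|S| == 0%N)] = [set set0].
  apply/setP => S; rewrite !inE cards_eq0.
  case: eqP => [->|]; rewrite ?andbF ?andbT //.
  rewrite /Qs inE /=; apply/forall_inP => x; by rewrite inE.
by rewrite cards1.
Qed.

Lemma Aform (F : finFieldType) s : (2%:R : F) != 0 ->
  ((Acnt F s)%:R : rat) * (s`!)%:R = \prod_(i < s) ((#|F|%:R : rat) - (2 * i + 1)%:R).
Proof.
move=> h2; elim: s => [|s IH]; first by rewrite big_ord0 fact0 mulr1 Acnt0.
rewrite big_ord_recr /= -IH factS natrM.
have E := congr1 (fun n => n%:R : rat) (Arec s h2); rewrite /= !natrM in E.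
have NB : ((Acnt F s)%:R : rat) * ((#|F| - (2 * s).+1)%:R) =
          (Acnt F s)%:R * (#|F|%:R - (2 * s + 1)%:R).
  case: (leqP (2 * s).+1 #|F|) => hq; first by rewrite natrB // addn1.
  case: (posnP (Acnt F s)) => [->|/Acnt_le]; first by rewrite !mul0r.
  by rewrite leqNgt hq.
rewrite mulrA E NB; ring.
Qed.

Lemma nsurj_big h s : (h < s)%N -> nsurj h s = 0%N.
Proof.
move=> hs; rewrite /nsurj; apply/eqP; rewrite cards_eq0; apply/eqP/setP => f.
rewrite !inE; apply/negP => /forallP sf.
have sub : [set: 'I_s] \subset f @: [set: 'I_h].
  apply/subsetP => j _; have/existsP [i /eqP <-] := sf j; exact: imset_f (in_setT i).
have : (s <= h)%N.
  rewrite -{1}(card_ord s) -cardsT; apply: leq_trans (subset_leq_card sub) _.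
  by apply: leq_trans (leq_imset_card _ _) _; rewrite cardsT card_ord.
lia.
Qed.

Lemma nsurj0 h : (0 < h)%N -> nsurj h 0 = 0%N.
Proof.
move=> h0; rewrite /nsurj; apply/eqP; rewrite -leqn0; apply: leq_trans (max_card _) _.
by rewrite card_ffun !card_ord exp0n.
Qed.

Lemma count0_Gamma (F : finFieldType) h : (2%:R : F) != 0 -> (0 < h)%N ->
  ((#|[set a : {ffun 'I_h -> F} | P0 a]|)%:R : rat) = Gamma h #|F|.
Proof.
move=> h2 h0.
rewrite count0_sum. under eq_bigr => S _ do rewrite card_img.
rewrite sum_by_size natr_sum /Gamma.
set q := #|F|. set L := minn h ((q - 1) %/ 2).
have pw : forall s : nat, (\prod_(i < s) ((q%:R : rat) - (2 * i + 1)%:R)) / (s`!)%:R * (nsurj h s)%:R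
    = ((Acnt F s * nsurj h s)%N)%:R.
  move=> s; rewrite -(Aform s h2) mulfK ?natrM // pnatr_eq0 -lt0n fact_gt0 //.
under [RHS]eq_bigr => s _ do rewrite pw.
rewrite -(big_mkord xpredT (fun s => ((Acnt F s * nsurj h s)%N%:R : rat))).
rewrite (big_cat_nat _ (n := 1)) //= big_nat1 nsurj0 // muln0 add0r.
have Lq : (L.+1 <= q.+1)%N by rewrite /L; lia.
rewrite (big_cat_nat _ (n := L.+1)) //=.
rewrite [X in _ + X]big1_seq ?addr0 // => s /andP [_]; rewrite mem_index_iota => /andP [Ls _].
have [hs|Ns] : (h < s)%N \/ ((q - 1) %/ 2 < s)%N by rewrite /L in Ls; lia.
- by rewrite nsurj_big // muln0.
- case: (posnP (Acnt F s)) => [->|/Acnt_le]; first by rewrite mul0n.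
  move=> H; exfalso; rewrite -/q in H; lia.
Qed.

Lemma goodf_sym (F : finFieldType) h (a : {ffun 'I_h -> F}) i j :
  goodf a -> i != j -> a i + a j != 0.
Proof.
move=> /forallP ga ne; case: (ltngtP i j) => [ij|ji|/val_inj e].
- by have /forallP/(_ j)/implyP/(_ ij) := ga i.
- rewrite addrC; by have /forallP/(_ i)/implyP/(_ ji) := ga j.
- by rewrite e eqxx in ne.
Qed.

Lemma P0_good (F : finFieldType) h (a : {ffun 'I_h -> F}) : (2%:R : F) != 0 ->
  P0 a = goodf a && [forall i, a i != 0].
Proof.
move=> h2; rewrite /P0; apply/andP/andP => [[nz /forallP H]|[ga /forallP nz]].
- split => //; apply/forallP => i; apply/forallP => j; apply/implyP => _.
  by have /forallP := H i.
- split; first exact/forallP.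
  apply/forallP => i; apply/forallP => j.
  case: (eqVneq i j) => [<-|ne]; last exact: goodf_sym.
  by rewrite -mulr2n -mulr_natl mulf_neq0.
Qed.

Lemma one_zero (F : finFieldType) h' (i : 'I_h'.+1) : (2%:R : F) != 0 ->
  #|[set a : {ffun 'I_h'.+1 -> F} | goodf a && (a i == 0)]| =
  #|[set b : {ffun 'I_h' -> F} | P0 b]|.
Proof.
move=> h2.
pose Psi := fun b : {ffun 'I_h' -> F} =>
  [ffun j => if unlift i j is Some j' then b j' else 0].
have -> : [set a : {ffun 'I_h'.+1 -> F} | goodf a && (a i == 0)] = Psi @: [set b | P0 b].
  apply/setP => a; rewrite inE; apply/andP/imsetP.
  - move=> [ga /eqP ai].
    have nz : forall j', a (lift i j') != 0.
      by move=> j'; have := goodf_sym ga (neq_lift i j'); rewrite ai add0r.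
    exists [ffun j' => a (lift i j')].
    + rewrite inE; apply/andP; split.
      * by apply/forallP => j'; rewrite ffunE.
      * apply/forallP => j1; apply/forallP => j2; rewrite !ffunE.
        case: (eqVneq j1 j2) => [<-|ne].
        - by rewrite -mulr2n -mulr_natl mulf_neq0.
        - by apply: goodf_sym ga _; rewrite (inj_eq (@lift_inj _ i)).
    + apply/ffunP => j; rewrite ffunE; case: unliftP => [j' ->|->]; by rewrite ?ffunE ?ai.
  - move=> [b]; rewrite inE => /andP [/forallP nz /forallP pb] ->. split.
    + apply/forallP => j1; apply/forallP => j2; rewrite !ffunE.
      case: unliftP => [j1' ->|->]; case: unliftP => [j2' ->|->]; apply/implyP => lt12.
      * by have /forallP := pb j1'.
      * by rewrite addr0 nz.
      * by rewrite add0r nz.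
      * by rewrite ltnn in lt12.
    + by rewrite ffunE unlift_none.
rewrite card_imset // => b b' e; apply/ffunP => j'.
move/ffunP/(_ (lift i j')): e; by rewrite !ffunE liftK.
Qed.

Lemma cardE' (T : finType) (Q : pred T) : #|[set x | Q x]| = (\sum_x (Q x : nat))%N.
Proof.
rewrite -sum1_card big_mkcond /=; apply: eq_bigr => x _; rewrite inE; by case: (Q x).
Qed.

Lemma good_count (F : finFieldType) h' : (2%:R : F) != 0 ->
  #|[set a : {ffun 'I_h'.+1 -> F} | goodf a]| =
  (#|[set a : {ffun 'I_h'.+1 -> F} | P0 a]| + h'.+1 * #|[set b : {ffun 'I_h' -> F} | P0 b]|)%N.
Proof.
move=> h2.
have -> : (h'.+1 * #|[set b : {ffun 'I_h' -> F} | P0 b]| =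
     \sum_(i < h'.+1) #|[set a : {ffun 'I_h'.+1 -> F} | goodf a && (a i == 0%R)]|)%N.
  under eq_bigr => i _ do rewrite one_zero //.
  by rewrite big_const card_ord iter_addn_0 mulnC.
under eq_bigr => i _ do rewrite cardE'. rewrite !cardE'.
rewrite exchange_big -big_split /=. apply: eq_bigr => a _.
case ga: (goodf a); last first.
  by rewrite P0_good // ga /= big1.
rewrite P0_good // ga /=.
case: (boolP [forall i, a i != 0]) => [nz|].
- by rewrite big1 // => i _; rewrite (negbTE (forallP nz i)).
- move/forallPn => [i0]; rewrite negbK => /eqP a0.
  rewrite (bigD1 i0) //= a0 eqxx big1 // => j ne.
  have := goodf_sym ga ne; rewrite a0 addr0 => /negbTE -> //.
Qed.

Unset Implicit Arguments.

Theorem proposition3p1 (F : finFieldType) (p m k h : nat)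
  (hp : prime p) (hm : (0 < m)%N) (hq : #|F| = (p ^ m)%N)
  (h3 : (3 <= h)%N) (hk : (h <= k)%N) :
  let q := (p ^ m)%N in
  let n : rat := (code_length (D2 F k h))%:R in
  [/\ (p = 2)%N -> (h <= q)%N ->
        n = (q ^ (k - h))%:R * ((q ^ h)%:R - \prod_(i < h) ((q%:R : rat) - i%:R)) - 1,
      (p = 2)%N -> (q < h)%N -> n = (q ^ k)%:R - 1
    & (2 < p)%N ->
        n = (q ^ (k - h))%:R * ((q ^ h)%:R - Gamma h q - h%:R * Gamma (h - 1) q) - 1].
Proof.
move=> q n; rewrite /n /q; clear n q.
set q := (p ^ m)%N; set n : rat := (code_length (D2 F k h))%:R.
have chp : p \in [pchar F] := card_finPcharP hq hp.
have [k' ek] : exists k', k = (h + k')%N by exists (k - h)%N; rewrite subnKC.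
have E0 := card_D2 F (leq_trans (isT : (2 <= 3)%N) h3) hk.
rewrite ek card_good_split in E0.
have E : n + ((q ^ k')%:R * (#|[set a : {ffun 'I_h -> F} | goodf a]|)%:R) + 1
         = (q ^ k')%:R * (q ^ h)%:R.
  by rewrite /n -natrM -[1]/(1%:R) -!natrD -natrM ek /q -hq E0 -expnD addnC.
have kh : (k - h)%N = k' by rewrite ek addKn.
rewrite kh.
have nE : n = (n + ((q ^ k')%:R * (#|[set a : {ffun 'I_h -> F} | goodf a]|)%:R) + 1)
   - (q ^ k')%:R * (#|[set a : {ffun 'I_h -> F} | goodf a]|)%:R - 1 by ring.
have G2 : (p = 2)%N -> #|[set a : {ffun 'I_h -> F} | goodf a]| = (q ^_ h)%N.
  move=> p2; have h2 : (2%:R : F) = 0 by rewrite -p2; exact: pcharf0.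
  have -> : [set a : {ffun 'I_h -> F} | goodf a] = [set a : {ffun 'I_h -> F} | injectiveb a].
    by apply/setP => a; rewrite !inE goodf_inj.
  by rewrite card_inj_ffuns card_ord hq.
split.
- move=> p2 hq'; rewrite nE E G2 // ffact_rat; ring.
- move=> p2 qh; rewrite nE E G2 // ffact_small // ek expnD natrM; ring.
- move=> p3.
  have h2 : (2%:R : F) != 0.
    rewrite -(dvdn_pcharf chp); apply/negP => /dvdn_leq; lia.
  have [h' eh] : exists h', h = h'.+1 by exists h.-1; lia.
  rewrite nE E; clear nE E; rewrite eh.
  rewrite good_count // natrD natrM !count0_Gamma // ?hq; last lia.
  rewrite subn1 /=; ring.
Qed.
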